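(* Let $p,q$ be positive integers with $p+q$ odd. For all $n\ge3$ and all $g\in\mathcal{J}^{p,q}_n$, $$\psi_n(g)\equiv\frac{\psi_{n-1}(g_L)+\psi_{n-1}(g_R)}{p+q}\pmod{2^{\lfloor (n-1)/2\rfloor}}.$$
   Context: Let $p,q$ be positive integers with $p+q$ odd. $\mathbb{Z}_{2^k}$ denotes the integers modulo $2^k$ ($\mathbb{Z}_1$ trivial); as $p+q$ is odd, division by $p+q$ and $(p+q)^2$ is well defined in $\mathbb{Z}_{2^k}$. For $m\ge1$, $D_{2m}$ is the dihedral group of order $2m$, realized as pairs $(f,x)$, $f\in\mathbb{Z}_2$, $x\in\mathbb{Z}_m$, with product $(f_1,x_1)(f_2,x_2)=(f_1+f_2,x_1+(-1)^{f_1}x_2)$. Define $\Phi:D_{2m}\to D_{2m}$, $\Phi((f,x))=(f,\delta(f=1)(p+q)(p-q)-x)$, where $\delta(f=1)$ is $1$ if $f=1$ and $0$ otherwise. $\mathrm{Aut}(T_1)$ is trivial; for $k\ge1$, $\mathrm{Aut}(T_{k+1})$ is the set of triples $g=(g_f,g_L,g_R)$, $g_f\in\mathbb{Z}_2$, $g_L,g_R\in\mathrm{Aut}(T_k)$, with product $(f,A,B)(g,C,D)=(f+g,AC,BD)$ if $f=0$ and $(f+g,AD,BC)$ if $f=1$; subscripts chain ($g_{LR}=(g_L)_R$, $g_{Lf}=(g_L)_f$). Recursively: $\mathcal{J}_1=\mathrm{Aut}(T_2)$, $\psi_1=0$, $\Delta_1(g)=(g_f,0)$; $\mathcal{J}_2=\{g\in\mathrm{Aut}(T_3):g_L=g_R\}$,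 $\psi_2(g)=\delta(g_{Lf}=1)\in\mathbb{Z}_2$, $\Delta_2(g)=(g_f,\psi_2(g))$; for $n\ge3$, $\mathcal{J}_n=\{g\in\mathrm{Aut}(T_{n+1}):g_L,g_R\in\mathcal{J}_{n-1},\ \Delta_{n-1}(g_L)=\Phi(\Delta_{n-1}(g_R))\}$, with $\psi_n:\mathcal{J}_n\to\mathbb{Z}_{2^{\lfloor n/2\rfloor}}$ given by $\psi_n(g)=(\psi_{n-1}(g_L)+\psi_{n-1}(g_R))/(p+q)$ for odd $n$ and $\psi_n(g)=\big(2(\psi_{n-2}(g_{LL})+\psi_{n-2}(g_{RL}))-\delta(g_{Lf}=1)(p+q)(p-q)\big)/(p+q)^2$ for even $n$ (with $2\psi_{n-2}(\cdot)$ read in $\mathbb{Z}_{2^{n/2}}$), and $\Delta_n:\mathcal{J}_n\to D_{2^{\lfloor n/2\rfloor+1}}$ given by $\Delta_n(g)=(g_f,\psi_{n-1}(g_L)-\psi_{n-1}(g_R))$ for odd $n$ and $\Delta_n(g)=(g_f,(p+q)\psi_n(g)-2\psi_{n-1}(g_R))$ for even $n$. In the claim, $\psi_n(g)\in\mathbb{Z}_{2^{\lfloor n/2\rfloor}}$ is reduced modulo $2^{\lfloor(n-1)/2\rfloor}$. *)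

(* Defs.v *)
From mathcomp Require Import all_boot all_order all_algebra.
Set Implicit Arguments. Unset Strict Implicit. Unset Printing Implicit Defensive.
Import Order.TTheory GRing.Theory Num.Theory.
Local Open Scope ring_scope.

(* aut k = Aut(T_{k+1}):  Aut(T_1) trivial, Aut(T_{k+1}) = Z2 x Aut(T_k) x Aut(T_k),
   a triple (g_f, g_L, g_R). (Group product not needed for the statement.) *)
Fixpoint aut (k : nat) : Type :=
  match k with
  | 0 => unit
  | k'.+1 => (bool * aut k' * aut k')%type
  end.

Definition aut_f (k : nat) (g : aut k.+1) : bool := g.1.1.
Definition aut_L (k : nat) (g : aut k.+1) : aut k := g.1.2.
Definition aut_R (k : nat) (g : aut k.+1) : aut k := g.2.

(* Elements of Z_{2^k} are represented by their canonical representative in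
   [0, 2^k) as integers. *)
Definition md (k : nat) (x : int) : int := (x %% (2 ^ k)%N%:Z)%Z.

(* Division x / a in Z_{2^k}: the (unique, for odd a) residue y with a*y = x. *)
Definition zdiv (k : nat) (a x : int) : int :=
  match [pick y : 'I_(2 ^ k) | md k (a * (nat_of_ord y)%:Z - x) == 0] with
  | Some y => (nat_of_ord y)%:Z
  | None => 0
  end.

(* Data attached to g in Aut(T_{n+1}) at level n:
   ipsi = psi_n(g) in Z_{2^{n/2}}, idlt = Delta_n(g) in D_{2^{n/2+1}}
   (pair (f, x) with x in Z_{2^{n/2}}), iJ = (g \in J_n). *)
Record info := Info { ipsi : int; idlt : bool * int; iJ : Prop }.

Section Rec.
Variables p q : nat.
Definition spq : int := (p + q)%N%:Z.
Definition epq : int := spq * (p%:Z - q%:Z).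

Definition Phi (k : nat) (d : bool * int) : bool * int :=
  (d.1, md k ((if d.1 then epq else 0) - d.2)).

Fixpoint Jdata (n : nat) : aut n -> info :=
  match n return aut n -> info with
  | 0 => fun _ => Info 0 (false, 0) False
  | m.+1 => fun g0 =>
    (match m as m0 return aut m0.+1 -> (aut m0 -> info) -> info with
     | 0 => fun g _ => (* n = 1 *) Info 0 (g.1.1, 0) True
     | l.+1 => fun g Fm =>
        let gf := g.1.1 in
        let gL := g.1.2 in
        let gR := g.2 in
        match l as l0 return aut l0.+1 -> aut l0.+1 -> (aut l0.+1 -> info) -> (aut l0 -> info) -> info with
        | 0 => fun gL gR _ _ => (* n = 2 *)
            let ps := if gL.1.1 then 1 else 0 in
            Info ps (gf, ps) (gL = gR)
        | j.+1 => fun gL gR Fm' Fl =>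
            let nn := j.+3 in
            let k := nn./2 in
            let iL := Fm' gL in
            let iR := Fm' gR in
            let iLL := Fl gL.1.2 in
            let iRL := Fl gR.1.2 in
            let ps :=
              if odd nn then zdiv k spq (ipsi iL + ipsi iR)
              else zdiv k (spq * spq)
                     (2 * (ipsi iLL + ipsi iRL) - (if gL.1.1 then epq else 0)) in
            let dl :=
              if odd nn then (gf, md k (ipsi iL - ipsi iR))
              else (gf, md k (spq * ps - 2 * ipsi iR)) in
            Info ps dl
              [/\ iJ iL, iJ iR & idlt iL = Phi (j.+2)./2 (idlt iR)]
        end gL gR Fm (@Jdata l)
     end) g0 (@Jdata m)
  end.
End Rec.

Definition J (p q n : nat) (g : aut n) : Prop := iJ (Jdata p q g).
Definition psi (p q n : nat) (g : aut n) : int := ipsi (Jdata p q g).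
Definition Delta (p q n : nat) (g : aut n) : bool * int := idlt (Jdata p q g).

(* Main.v *)
Require Import Defs.
From mathcomp Require Import all_boot all_order all_algebra.
From mathcomp Require Import ring.
Import Order.TTheory GRing.Theory Num.Theory.
Local Open Scope ring_scope.

Definition D k : int := (2 ^ k)%N%:Z.

Lemma D_gt0 k : 0 < D k.
Proof. by rewrite /D ltz_nat expn_gt0. Qed.

Lemma mdE k x : md k x = (x %% D k)%Z. Proof. by []. Qed.

Lemma md_eq k x y : (md k x = md k y) <-> (D k %| x - y)%Z.
Proof. by rewrite /md -eqz_mod_dvd; split => [->|/eqP]. Qed.

Lemma cop_spq p q k : odd (p + q) -> coprimez (spq p q) (D k).
Proof.
move=> o; rewrite /spq /D coprimezE !absz_nat.
by case: k => [|k]; [rewrite expn0 coprimen1 | rewrite coprime_pexpr // coprimen2].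
Qed.

Lemma zdiv_spec k a x : coprimez a (D k) ->
  (0 <= zdiv k a x < D k) /\ (D k %| a * zdiv k a x - x)%Z.
Proof.
move=> co; rewrite /zdiv; case: pickP => [y /eqP H | H0].
  split; first by rewrite /D lez_nat ltz_nat ltn_ord.
  by apply/dvdz_mod0P.
exfalso.
case: (Bezoutz a (D k)) => u [v huv].
move/eqP: co => co; rewrite co in huv.
have Dn : D k != 0 by rewrite gt_eqF // D_gt0.
set y := ((u * x) %% D k)%Z.
have y0 : 0 <= y by apply: modz_ge0.
have y1 : y < D k by apply: ltz_pmod; apply: D_gt0.
have yn : (`|y|%N < 2 ^ k)%N.
  by rewrite -ltz_nat gez0_abs.
have := H0 (Ordinal yn); rewrite /= gez0_abs // => /negP; apply.
apply/eqP/dvdz_mod0P.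
have -> : a * y - x = a * (y - u * x) + (u * a - 1) * x by ring.
apply: rpredD.
  apply: dvdz_mull; rewrite -eqz_mod_dvd; apply/eqP; exact: modz_mod.
have -> : u * a - 1 = - (v * D k) by rewrite -huv; ring.
by rewrite mulNr rpredN; apply: dvdz_mulr; apply: dvdz_mull; exact: dvdzz.
Qed.

Lemma D_le k l : (k <= l)%N -> (D k %| D l)%Z.
Proof. by move=> h; rewrite /D dvdzE !absz_nat dvdn_exp2l. Qed.
Lemma JdataE p q j (g : aut j.+3) :
  let iL := Jdata p q (aut_L g) in let iR := Jdata p q (aut_R g) in
  let iLL := Jdata p q (aut_L (aut_L g)) in let iRL := Jdata p q (aut_L (aut_R g)) in
  let k := (j.+3)./2 in
  let ps :=
      if odd j.+3 then zdiv k (spq p q) (ipsi iL + ipsi iR)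
      else zdiv k (spq p q * spq p q)
             (2 * (ipsi iLL + ipsi iRL) - (if aut_f (aut_L g) then epq p q else 0)) in
  Jdata p q g = Info ps
     (if odd j.+3 then (aut_f g, md k (ipsi iL - ipsi iR))
      else (aut_f g, md k (spq p q * ps - 2 * ipsi iR)))
     [/\ iJ iL, iJ iR & idlt iL = Phi p q (j.+2)./2 (idlt iR)].
Proof. by case: g => [[gf gL] gR]. Qed.

Lemma dvd_mod k x : (D k %| md k x - x)%Z.
Proof. by rewrite -eqz_mod_dvd; apply/eqP; exact: modz_mod. Qed.

Lemma md_zdiv k a x : coprimez a (D k) -> md k (zdiv k a x) = zdiv k a x.
Proof. by move=> co; have [h _] := zdiv_spec k a x co; rewrite mdE modz_small. Qed.
Theorem lemma2 (p q : nat) (hp : (0 < p)%N) (hq : (0 < q)%N) (hodd : odd (p + q))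
  (m : nat) (hm : (2 <= m)%N) (g : aut m.+1) :
  J p q g ->
  md m./2 (psi p q g) =
  zdiv m./2 (spq p q) (psi p q (aut_L g) + psi p q (aut_R g)).
Proof.
case: m hm g => [|[|j]] // _ g.
rewrite /J /psi (JdataE p q j g).
case: (boolP (odd j)) => oj.
  case: j oj g => [|i] // oi g.
  have -> : odd i.+4 = false by move: oi => /= ->.
  rewrite (JdataE p q i (aut_L g)) (JdataE p q i (aut_R g)).
  have -> : odd i.+3 = true by move: oi => /= ->.
  have hk : (i.+4)./2 = (i.+3)./2.+1.
    by move: oi => /= oi; rewrite -(odd_double_half i) (negbTE oi) add0n /= uphalf_double doubleK.
  rewrite hk.
  move: (i.+3)./2 => K.
  move: (Jdata p q (aut_L (aut_L g))) (Jdata p q (aut_R (aut_L g))) 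
        (Jdata p q (aut_L (aut_R g))) (Jdata p q (aut_R (aut_R g))) => IA IB IC ID.
  move: (aut_f (aut_L g)) (aut_f (aut_R g)) (aut_f g) => fL fR f.
  move: (Jdata p q (aut_L (aut_L g))) (Jdata p q (aut_L (aut_R g))) => _ _.
  move: (ipsi IA) (ipsi IB) (ipsi IC) (ipsi ID) => a b c d /=.
  move=> [_ _ HD].
  rewrite /Phi /= in HD; case: HD => <- /md_eq H2.
  set s := spq p q.
  have co : forall k, coprimez s (D k) by move=> k; apply: cop_spq.
  have co2 : coprimez (D K) (s * s) by rewrite coprimez_sym coprimezMl !co.
  set e := (if fL then epq p q else 0) in H2 *.
  have co2' : coprimez (s * s) (D K.+1) by rewrite coprimezMl !co.
  have [_ h1] := zdiv_spec K.+1 (s * s) (2 * (a + c) - e) co2'.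
  set P := zdiv K.+1 (s * s) (2 * (a + c) - e) in h1 *.
  set PL := zdiv K s (a + b).
  set PR := zdiv K s (c + d).
  have [_ hL] := zdiv_spec K s (a + b) (co K).
  have [_ hR] := zdiv_spec K s (c + d) (co K).
  have [_ hZ] := zdiv_spec K s (PL + PR) (co K).
  set Z := zdiv K s (PL + PR) in hZ *.
  have eZ : md K Z = Z by apply: md_zdiv.
  rewrite -eZ; apply/md_eq.
  rewrite -(Gauss_dvdzr _ co2).
  have h1' : (D K %| s * s * P - (2 * (a + c) - e))%Z.
    apply: dvdz_trans h1; apply: D_le; exact: leqnSn.
  have hm := dvd_mod K (c - d).
  have -> : s * s * (P - Z) = (s * s * P - (2 * (a + c) - e))
     + ((a - b - (e - md K (c - d))) - (md K (c - d) - (c - d)))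
     - s * (s * Z - (PL + PR)) - (s * PL - (a + b)) - (s * PR - (c + d)) by ring.
  apply: rpredB; [apply: rpredB; [apply: rpredB; [apply: rpredD; [exact: h1' | apply: rpredB; [exact: H2 | exact: hm]] | apply: dvdz_mull; exact: hZ] | exact: hL] | exact: hR].
have -> : odd j.+3 = true by rewrite /= oj.
move=> _.
have -> : (j.+3)./2 = (j.+2)./2.
  by rewrite -(odd_double_half j) (negbTE oj) add0n /= uphalf_double doubleK.
by rewrite md_zdiv // cop_spq.
Qed.
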